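(* Let $p\ge 2$ and let $J$ be a periodic Jacobi operator on $\ell^2(\mathbb{Z})$ with period $p$, given by $(J\psi)_n=a_{n-1}\psi_{n-1}+b_n\psi_n+a_n\psi_{n+1}$, where $a_n>0$, $b_n\in\mathbb{R}$, $a_{n+p}=a_n$, $b_{n+p}=b_n$ for all $n\in\mathbb{Z}$. Let $A:=(a_1a_2\cdots a_p)^{1/p}$, let $\sigma_1,\dots,\sigma_p$ be the spectral bands of $J$, and let $s:=\lambda_p^{\max}-\lambda_1^{\min}$. If $d$ is a real number with $s\le d$, then $$\frac{1}{\log(d/A)}\le\sum_{n=1}^{p}\frac{1}{\log\big(4d/|\sigma_n|\big)}.$$
   Context: Spectral structure: the spectrum of $J$ is $\sigma(J)=\{\lambda\in\mathbb{R}: |\Delta(\lambda)|\le 2\}$, where $\Delta(\lambda)=\operatorname{tr}\big(A_p(\lambda)A_{p-1}(\lambda)\cdots A_1(\lambda)\big)$ with $A_n(\lambda)=\begin{pmatrix}(\lambda-b_n)/a_n & -a_{n-1}/a_n\\ 1&0\end{pmatrix}$ (the discriminant, a real polynomial of degree $p$). It is a standard fact that this set is a union of $p$ closed intervals (bands) $\sigma_n=[\lambda_n^{\min},\lambda_n^{\max}]$, $1\le n\le p$, with $\lambda_n^{\min}<\lambda_n^{\max}\le\lambda_{n+1}^{\min}$ (bands may touch but do not overlap); on each band $\Delta$ is monotone and maps it onto $[-2,2]$. The spectral gaps are $\gamma_n=(\lambda_n^{\max},\lambda_{n+1}^{\min})$, $1\le n\le p-1$ (possibly empty). $|\cdot|$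 denotes Lebesgue measure (length). *)

(* Defs.v *)
From Stdlib Require Import Reals ZArith List.
Import ListNotations.
Open Scope R_scope.

Record M2 := mkM2 { m11 : R; m12 : R; m21 : R; m22 : R }.

Definition M2id : M2 := mkM2 1 0 0 1.

Definition M2mul (X Y : M2) : M2 :=
  mkM2 (m11 X * m11 Y + m12 X * m21 Y) (m11 X * m12 Y + m12 X * m22 Y)
       (m21 X * m11 Y + m22 X * m21 Y) (m21 X * m12 Y + m22 X * m22 Y).

Definition M2tr (X : M2) : R := m11 X + m22 X.

Definition transfer (a b : Z -> R) (lam : R) (n : Z) : M2 :=
  mkM2 ((lam - b n) / a n) (- a (n - 1)%Z / a n) 1 0.

Fixpoint transfer_prod (a b : Z -> R) (lam : R) (k : nat) : M2 :=
  match k with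
  | O => M2id
  | S k' => M2mul (transfer a b lam (Z.of_nat (S k'))) (transfer_prod a b lam k')
  end.

Definition discriminant (a b : Z -> R) (p : nat) (lam : R) : R :=
  M2tr (transfer_prod a b lam p).

Definition sum1 (p : nat) (f : nat -> R) : R := fold_right Rplus 0 (map f (seq 1 p)).
Definition prod1 (p : nat) (f : nat -> R) : R := fold_right Rmult 1 (map f (seq 1 p)).

(* lo n, hi n (1 <= n <= p) are the endpoints lambda_n^min, lambda_n^max of the
   spectral bands sigma_n = [lo n, hi n] of J: the spectrum
   {lam | |Delta lam| <= 2} is the union of the p bands, ordered and
   non-overlapping, and Delta is monotone on each band mapping it onto [-2,2].
   These properties determine the bands uniquely. *)
Definition spectral_bands (a b : Z -> R) (p : nat) (lo hi : nat -> R) : Prop :=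
  (forall n, (1 <= n <= p)%nat -> lo n < hi n) /\
  (forall n, (1 <= n < p)%nat -> hi n <= lo (S n)) /\
  (forall lam, Rabs (discriminant a b p lam) <= 2 <->
     exists n, (1 <= n <= p)%nat /\ lo n <= lam <= hi n) /\
  (forall n, (1 <= n <= p)%nat ->
     ((forall x y, lo n <= x <= hi n -> lo n <= y <= hi n -> x <= y ->
         discriminant a b p x <= discriminant a b p y) \/
      (forall x y, lo n <= x <= hi n -> lo n <= y <= hi n -> x <= y ->
         discriminant a b p y <= discriminant a b p x)) /\
     (forall t, -2 <= t <= 2 <->
        exists x, lo n <= x <= hi n /\ discriminant a b p x = t)).

(* Main.v *)
Require Import Defs.
From Stdlib Require Import Reals ZArith List Lra Lia.
From mathcomp Require all_boot all_algebra Rstruct.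
From mathcomp Require ring zify.
Module MC.
Import mathcomp.boot.all_boot mathcomp.algebra.all_algebra mathcomp.reals_stdlib.Rstruct.
Import mathcomp.algebra_tactics.ring mathcomp.zify.zify.
Import mathcomp.order.order.Order.TTheory GRing.Theory Num.Theory.
Local Open Scope ring_scope.

Fixpoint tp (a b : Z -> R) (k : nat) : {poly R} * {poly R} * {poly R} * {poly R} :=
  match k with
  | O => (1, 0, 0, 1)
  | S k' => let: (p11, p12, p21, p22) := tp a b k' in
    let q := ('X - (b (Z.of_nat k))%:P) * ((a (Z.of_nat k))^-1)%:P in
    let e := (- a (Z.sub (Z.of_nat k) 1) / a (Z.of_nat k))%:P in
    (q * p11 + e * p21, q * p12 + e * p22, p11, p12)
  end.

Lemma tp_eval a b lam k :
  let: (p11, p12, p21, p22) := tp a b k in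
  [/\ m11 (transfer_prod a b lam k) = p11.[lam],
      m12 (transfer_prod a b lam k) = p12.[lam],
      m21 (transfer_prod a b lam k) = p21.[lam] &
      m22 (transfer_prod a b lam k) = p22.[lam]].
Proof.
elim: k => [|k IH] /=; first by rewrite !hornerE.
case: (tp a b k) IH => [[[p11 p12] p21] p22] [E1 E2 E3 E4].
rewrite /M2mul /transfer /= !hornerE -E1 -E2 -E3 -E4.
split; rewrite ?RplusE ?RmultE ?RdivE ?RminusE ?RoppE; ring.
Qed.

Lemma q_props (c d : R) : d != 0 ->
  size (('X - c%:P) * d%:P) = 2%N /\ lead_coef (('X - c%:P) * d%:P) = d.
Proof.
move=> hd; have hX : 'X - c%:P != 0 by rewrite -size_poly_eq0 size_XsubC.
have hC : d%:P != 0 by rewrite polyC_eq0.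
rewrite size_mul // size_XsubC size_polyC hd lead_coefM lead_coefXsubC lead_coefC mul1r.
by [].
Qed.

Lemma tp_size a b k : (forall n, a n != 0) ->
  let: (p11, p12, p21, p22) := tp a b k in
  [/\ size p11 = k.+1, lead_coef p11 = \prod_(i < k) (a (Z.of_nat i.+1))^-1,
      (size p12 <= k)%N, (size p21 <= k)%N & (size p22 <= k.+1)%N].
Proof.
move=> Ha; elim: k => [|k IH] /=.
  by rewrite !size_polyC lead_coefC big_ord0 oner_neq0 eqxx.
case: (tp a b k) IH => [[[p11 p12] p21] p22] [S1 L1 S2 S3 S4].
have hinv : (a (Z.of_nat k.+1))^-1 != 0 by rewrite invr_eq0.
have [Sq Lq] := @q_props (b (Z.of_nat k.+1)) _ hinv.
set q := (_ * _)%R in Sq Lq *.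
have Se : (size ((- a (Z.sub (Z.of_nat k.+1) 1) / a (Z.of_nat k.+1))%:P) <= 1)%N by apply: size_polyC_leq1.
set e := ((- _ / _)%:P) in Se *. clearbody q e.
have hq : q != 0 by rewrite -size_poly_eq0 Sq.
have h11 : p11 != 0 by rewrite -size_poly_eq0 S1.
have Sqp : size (q * p11) = k.+2 by rewrite size_mul // Sq S1.
have Sep : (size (e * p21)%R < size (q * p11)%R)%N.
  rewrite Sqp; apply: (leq_ltn_trans (size_polyMleq e p21)); move: Se S3; set u := size e; set v := size p21. rewrite -?subn1; lia.
split.
- by rewrite size_polyDl.
- by rewrite lead_coefDl // lead_coefM Lq L1 big_ord_recr /= mulrC.
- have := size_polyD (q * p12) (e * p22).
  have := size_polyMleq q p12; have := size_polyMleq e p22. rewrite Sq.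
  move: Se S2 S4; set u := size e; set v := size p12; set w := size p22.
  set x := size (q * p12 + e * p22)%R; set y := size (q * p12)%R; set z := size (e * p22)%R. rewrite -?subn1; lia.
- by rewrite S1.
- by apply: (leq_trans S2); rewrite -addn2 leq_addr.
Qed.

Definition dpoly a b k : {poly R} := let: (p11, _, _, p22) := tp a b k in p11 + p22.

Lemma dpoly_eval a b k lam : discriminant a b k lam = (dpoly a b k).[lam].
Proof.
rewrite /discriminant /M2tr /dpoly.
have := tp_eval a b lam k; case: (tp a b k) => [[[p11 p12] p21] p22] [-> _ _ ->].
by rewrite hornerD.
Qed.

Lemma dpoly_size a b k : (forall n, a n != 0) ->
  size (dpoly a b k.+1) = k.+2 /\
  lead_coef (dpoly a b k.+1) = \prod_(i < k.+1) (a (Z.of_nat i.+1))^-1.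
Proof.
move=> Ha; have := tp_size a b k.+1 Ha; rewrite /dpoly /=.
have := tp_size a b k Ha.
case: (tp a b k) => [[[p11 p12] p21] p22] [_ _ S2 _ _] /= [S1 L1 _ _ _].
move: S1 L1; generalize (\prod_(i < k.+1) (a (Z.of_nat i.+1))^-1) => c.
move: (_ + _ * p21) => P S1 L1.
have lt : (size p12 < size P)%N by rewrite S1 ltnS (leq_trans S2) ?leqnSn.
by rewrite size_polyDl // lead_coefDl.
Qed.

Lemma disc_factor a b k (x : nat -> R) : (forall n, a n != 0) ->
  (forall i j, (1 <= i)%N -> (i < j)%N -> (j <= k.+1)%N -> Rlt (x i) (x j)) ->
  (forall i, (1 <= i)%N -> (i <= k.+1)%N -> discriminant a b k.+1 (x i) = 0) ->
  forall y, discriminant a b k.+1 y =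
    (\prod_(i < k.+1) (a (Z.of_nat i.+1))^-1) * \prod_(i < k.+1) (y - x i.+1).
Proof.
move=> Ha Hx Hr y.
have [S L] := dpoly_size a b k Ha.
set rs := [seq x i.+1 | i <- iota 0 k.+1].
have Srs : size rs = k.+1 by rewrite size_map size_iota.
have Hall : all (root (dpoly a b k.+1)) rs.
  apply/allP => z /mapP [i hi ->]; rewrite /root -dpoly_eval.
  rewrite mem_iota /= in hi.
  by apply/eqP; apply: Hr.
have Hu : uniq_roots rs.
  rewrite uniq_rootsE map_inj_in_uniq ?iota_uniq //.
  move=> i j; rewrite !mem_iota /= => hi hj hij.
  case: (ltngtP i j) => // h.
    by have := Hx i.+1 j.+1 isT h hj; rewrite hij => /Rlt_irrefl.
  by have := Hx j.+1 i.+1 isT h hi; rewrite hij => /Rlt_irrefl.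
have S' : size (dpoly a b k.+1) = (size rs).+1 by rewrite S Srs.
have E := all_roots_prod_XsubC S' Hall Hu.
rewrite dpoly_eval E hornerZ horner_prod L big_map.
congr (_ * _).
rewrite -(subn0 k.+1) -/(index_iota 0 k.+1) big_mkord subn0.
by apply: eq_bigr => i _; rewrite hornerXsubC.
Qed.

Lemma prod1E p f : prod1 p f = \prod_(i < p) f i.+1.
Proof.
rewrite /prod1; have : forall s, fold_right Rmult 1 (map f (List.seq s p)) = \prod_(i < p) f (s + i)%N.
  elim: p => [|p IH] s /=; first by rewrite big_ord0.
  by rewrite big_ord_recl IH addn0; congr (_ * _); apply: eq_bigr => i _; rewrite addSnnS.
by move=> ->.
Qed.

Lemma disc_factorS a b k (x : nat -> R) : (forall n, a n <> 0%R) ->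
  (forall i j, (1 <= i)%coq_nat -> (i < j)%coq_nat -> (j <= k.+1)%coq_nat -> Rlt (x i) (x j)) ->
  (forall i, (1 <= i)%coq_nat -> (i <= k.+1)%coq_nat -> discriminant a b k.+1 (x i) = 0) ->
  forall y, discriminant a b k.+1 y =
    Rmult (Rinv (prod1 k.+1 (fun n => a (Z.of_nat n)))) (prod1 k.+1 (fun i => Rminus y (x i))).
Proof.
move=> Ha Hx Hr y; rewrite (@disc_factor a b k x).
- by rewrite !prod1E prodfV.
- by move=> n; apply/eqP.
- by move=> i j /ssrnat.leP h1 /ssrnat.ltP h2 /ssrnat.leP h3; apply: Hx.
- by move=> i /ssrnat.leP h1 /ssrnat.leP h2; apply: Hr.
Qed.

Lemma prod_boundS k (y : R) (x : nat -> R) j d :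
  ((1 <= j)%coq_nat /\ (j <= k.+1)%coq_nat) -> (forall i, ((1 <= i)%coq_nat /\ (i <= k.+1)%coq_nat) -> Rle (Rabs (Rminus y (x i))) d) ->
  Rle (Rabs (prod1 k.+1 (fun i => Rminus y (x i)))) (Rmult (Rabs (Rminus y (x j))) (pow d k)).
Proof.
move=> [/ssrnat.leP hj1 /ssrnat.leP hj2] Hb; apply/RleP.
rewrite prod1E RpowE.
have -> : Rabs (\prod_(i < k.+1) (y - x i.+1)) = `|\prod_(i < k.+1) (y - x i.+1)| by [].
rewrite normr_prod.
have jk : (j.-1 < k.+1)%N by case: j hj1 hj2.
rewrite (bigD1 (Ordinal jk)) //= prednK //.
apply: ler_wpM2l; first by [].
have <- : \prod_(i < k.+1 | i != Ordinal jk) d = d ^+ k.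
  by rewrite prodr_const cardC1 card_ord.
apply: ler_prod => i _; rewrite normr_ge0 /=; apply/RleP; apply: Hb; split; apply/ssrnat.leP => //.

Qed.
End MC.

From Stdlib Require Import ClassicalEpsilon.
Open Scope R_scope.

Lemma ln_le' x y : 0 < x -> x <= y -> ln x <= ln y.
Proof.
intros hx hxy; destruct (Rle_lt_or_eq_dec _ _ hxy) as [h|h].
- left; apply ln_increasing; auto.
- subst; lra.
Qed.

Lemma prod_pos (f : nat -> R) s : (forall n, 0 < f n) -> 0 < fold_right Rmult 1 (map f s).
Proof.
intros hf; induction s as [|n s IH]; simpl; [lra|].
apply Rmult_lt_0_compat; auto.
Qed.

Lemma sum_ge (f g : nat -> R) s : (forall n, In n s -> g n <= f n) ->
  fold_right Rplus 0 (map g s) <= fold_right Rplus 0 (map f s).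
Proof.
induction s as [|n s IH]; simpl; intros h; [lra|].
apply Rplus_le_compat; auto.
Qed.

Lemma sum_const c s : fold_right Rplus 0 (map (fun _ : nat => c) s) = INR (length s) * c.
Proof.
induction s as [|n s IH]; simpl length; [simpl; lra|].
rewrite S_INR; simpl; rewrite IH; lra.
Qed.

Theorem theorem1p1 (p : nat) (a b : Z -> R) (lo hi : nat -> R) (d : R) :
  (2 <= p)%nat ->
  (forall n : Z, 0 < a n) ->
  (forall n : Z, a (n + Z.of_nat p)%Z = a n) ->
  (forall n : Z, b (n + Z.of_nat p)%Z = b n) ->
  spectral_bands a b p lo hi ->
  hi p - lo 1%nat <= d ->
  let A := Rpower (prod1 p (fun n => a (Z.of_nat n))) (/ INR p) in
  1 / ln (d / A) <= sum1 p (fun n => 1 / ln (4 * d / (hi n - lo n))).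
Proof.
intros hp Ha _ _ Hsb Hd A.
destruct Hsb as [Hlh [Hord [_ Hband]]].
set (D := discriminant a b p).
assert (chain : forall j i, (1 <= i)%nat -> (i < j)%nat -> (j <= p)%nat -> hi i <= lo j).
{ induction j as [|j IH]; intros i h1 h2 h3; [lia|].
  destruct (Nat.eq_dec i j) as [->|hne].
  - apply Hord; lia.
  - assert (hi i <= lo j) by (apply IH; lia).
    assert (lo j < hi j) by (apply Hlh; lia).
    assert (hi j <= lo (S j)) by (apply Hord; lia). lra. }
assert (ends : forall n, (1 <= n <= p)%nat -> Rabs (D (lo n)) = 2 /\ Rabs (D (hi n)) = 2).
{ intros n hn. destruct (Hband n hn) as [Hmono Hon].
  assert (hl := Hlh n hn).
  assert (Rl : -2 <= D (lo n) <= 2) by (apply Hon; exists (lo n); split; [lra|reflexivity]).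
  assert (Rh : -2 <= D (hi n) <= 2) by (apply Hon; exists (hi n); split; [lra|reflexivity]).
  destruct (proj1 (Hon (-2)) ltac:(lra)) as [xm [hxm exm]].
  destruct (proj1 (Hon 2) ltac:(lra)) as [xM [hxM exM]].
  destruct Hmono as [Hm|Hm].
  - assert (D (lo n) <= D xm) by (apply Hm; lra).
    assert (D xM <= D (hi n)) by (apply Hm; lra).
    unfold D in *; split; [rewrite Rabs_left1|rewrite Rabs_right]; lra.
  - assert (D xM <= D (lo n)) by (apply Hm; lra).
    assert (D (hi n) <= D xm) by (apply Hm; lra).
    unfold D in *; split; [rewrite Rabs_right|rewrite Rabs_left1]; lra. }
set (x := fun n => epsilon (inhabits 0) (fun z => (1 <= n <= p)%nat -> lo n < z < hi n /\ D z = 0)).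
assert (hx : forall n, (1 <= n <= p)%nat -> lo n < x n < hi n /\ D (x n) = 0).
{ intros n hn. unfold x. apply (@epsilon_spec R (inhabits 0) (fun z => (1 <= n <= p)%nat -> lo n < z < hi n /\ D z = 0)); auto.
  destruct (Hband n hn) as [_ Hon].
  destruct (proj1 (Hon 0) ltac:(lra)) as [z [hz ez]].
  fold D in ez. exists z; intros _.
  destruct (ends n hn) as [e1 e2].
  assert (lo n <> z) by (intros <-; rewrite ez, Rabs_R0 in e1; lra).
  assert (z <> hi n) by (intros ->; rewrite ez, Rabs_R0 in e2; lra).
  split; [split|]; [destruct hz as [h1 h2]; lra|lra|exact ez]. }
assert (xmono : forall i j, (1 <= i)%nat -> (i < j)%nat -> (j <= p)%nat -> x i < x j).
{ intros i j h1 h2 h3.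
  destruct (hx i ltac:(lia)) as [[_ a1] _].
  destruct (hx j ltac:(lia)) as [[a2 _] _].
  assert (hi i <= lo j) by (apply chain; lia). lra. }
assert (lo1 : forall j, (1 <= j <= p)%nat -> lo 1%nat <= lo j).
{ intros j hj. destruct (Nat.eq_dec j 1) as [->|hne]; [lra|].
  assert (hi 1%nat <= lo j) by (apply chain; lia).
  assert (lo 1%nat < hi 1%nat) by (apply Hlh; lia). lra. }
assert (hip : forall j, (1 <= j <= p)%nat -> hi j <= hi p).
{ intros j hj. destruct (Nat.eq_dec j p) as [->|hne]; [lra|].
  assert (hi j <= lo p) by (apply chain; lia).
  assert (lo p < hi p) by (apply Hlh; lia). lra. }
assert (dist : forall y k, (1 <= k <= p)%nat -> lo 1%nat <= y <= hi p -> Rabs (y - x k) <= d).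
{ intros y k hk hy. destruct (hx k hk) as [[h1 h2] _].
  assert (lo 1%nat <= lo k) by auto. assert (hi k <= hi p) by auto.
  apply Rabs_le; lra. }
set (P := prod1 p (fun n => a (Z.of_nat n))).
assert (Ppos : 0 < P) by (apply prod_pos; auto).
destruct p as [|p']; [lia|].
assert (Hfac : forall y, D y = / P * prod1 (S p') (fun i => y - x i)).
{ intros y. unfold D, P. apply MC.disc_factorS.
  - intros n; apply not_eq_sym, Rlt_not_eq, Ha.
  - intros i j h1 h2 h3; apply xmono; lia.
  - intros i h1 h2; apply (hx i); lia. }
assert (dpos : 0 < d).
{ assert (lo 1%nat < hi 1%nat) by (apply Hlh; lia).
  assert (hi 1%nat <= hi (S p')) by (apply hip; lia). lra. }
assert (key0 : forall j y, (1 <= j <= S p')%nat -> lo 1%nat <= y <= hi (S p') ->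
          Rabs (D y) = 2 -> 2 * P <= Rabs (y - x j) * d ^ p').
{ intros j y hj hy e.
  rewrite Hfac, Rabs_mult, Rabs_inv, (Rabs_right P) in e by lra.
  assert (hb := MC.prod_boundS p' y x j d ltac:(lia) (fun i hi => dist y i ltac:(lia) hy)).
  assert (Rabs (prod1 (S p') (fun i => y - x i)) = 2 * P).
  { apply (Rmult_eq_compat_l P) in e. rewrite <- Rmult_assoc, Rinv_r, Rmult_1_l in e by lra. lra. }
  change (fun i => y - x i) with (fun i => Rminus y (x i)) in H. lra. }
assert (key : forall j, (1 <= j <= S p')%nat -> 4 * P <= (hi j - lo j) * d ^ p').
{ intros j hj. destruct (ends j hj) as [e1 e2]. destruct (hx j hj) as [[h1 h2] _].
  assert (lo 1%nat <= lo j) by auto. assert (hi j <= hi (S p')) by auto.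
  assert (k1 := key0 j (lo j) hj ltac:(lra) e1).
  assert (k2 := key0 j (hi j) hj ltac:(lra) e2).
  rewrite Rabs_left in k1 by lra. rewrite Rabs_right in k2 by lra. lra. }
set (n := S p') in *.
assert (INRn : 0 < INR n) by (apply lt_0_INR; lia).
assert (Apos : 0 < A) by (unfold A, Rpower; apply exp_pos).
assert (lnA : ln A = / INR n * ln P) by (unfold A, Rpower; rewrite ln_exp; reflexivity).
assert (lnd : ln (d / A) = ln d - ln A).
{ unfold Rdiv; rewrite ln_mult, ln_Rinv; try lra. apply Rinv_0_lt_compat; lra. }
assert (bnd : forall j, (1 <= j <= n)%nat -> 0 < ln (4 * d / (hi j - lo j)) <= INR n * ln (d / A)).
{ intros j hj. assert (hL := Hlh j hj).
  assert (lo 1%nat <= lo j) by auto. assert (hi j <= hi n) by auto.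
  set (L := hi j - lo j) in *.
  assert (Lpos : 0 < L) by (unfold L; lra).
  assert (Ld : L <= d) by (unfold L; lra).
  assert (e : ln (4 * d / L) = ln 4 + ln d - ln L).
  { assert (iL : 0 < / L) by (apply Rinv_0_lt_compat; lra).
    assert (d4 : 0 < 4 * d) by lra.
    unfold Rdiv; rewrite (ln_mult (4 * d) (/ L)), ln_mult, ln_Rinv by lra. ring. }
  split.
  - assert (1 < 4 * d / L).
    { apply (Rmult_lt_reg_r L); [lra|]. unfold Rdiv; rewrite Rmult_assoc, Rinv_l; lra. }
    rewrite <- ln_1; apply ln_increasing; lra.
  - assert (k := key j hj). fold L in k.
    assert (dp : 0 < d ^ p') by (apply pow_lt; lra).
    apply ln_le' in k; [|lra].
    rewrite (ln_mult 4 P), (ln_mult L (d ^ p')), ln_pow in k by lra.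
    assert (En : INR n = INR p' + 1) by (unfold n; apply S_INR).
    rewrite e, lnd, lnA.
    replace (INR n * (ln d - / INR n * ln P)) with (INR n * ln d - ln P) by (field; lra).
    rewrite En. lra. }
assert (LA : 0 < ln (d / A)).
{ destruct (bnd 1%nat ltac:(lia)) as [b1 b2]. nra. }
unfold sum1.
apply Rle_trans with (fold_right Rplus 0 (map (fun _ : nat => / (INR n * ln (d / A))) (List.seq 1 n))).
- rewrite sum_const, length_seq. right; field; lra.
- apply sum_ge. intros j hj. apply in_seq in hj.
  destruct (bnd j ltac:(lia)) as [b1 b2].
  unfold Rdiv; rewrite Rmult_1_l. apply Rinv_le_contravar; lra.
Qed.
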